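(* For twisted knot diagrams $K$ with an even number $2n$ of bars, the quantity $S(K)=\left|\sum_{i=1}^n s(e_{2i-1})-\sum_{i=1}^n s(e_{2i})\right|$ is invariant under the generalized Reidemeister moves and the twisted Reidemeister moves (which preserve the parity of the number of bars).
   Context: A twisted knot diagram is a virtual knot diagram with finitely many bars on its edges; twisted Reidemeister moves: $\Omega_1^t$ (a bar passes through a virtual crossing), $\Omega_2^t$ (two adjacent bars on an edge cancel), $\Omega_3^t$ (a real crossing is replaced by the crossing with over/under exchanged and a bar added on each of its four adjacent semiarcs). If $K$ has $2n\geq2$ bars $b_1,\dots,b_{2n}$, they cut $K$ into edges $e_1,\dots,e_{2n}$ numbered consecutively along the orientation. For an edge $e$, let $o_\pm(e)$ be the number of positive/negative crossings at which $e$ is the over-strand and $u_\pm(e)$ the number at which $e$ is the under-strand (a crossing of $e$ with itself counted once in each), and $s(e)=u_+(e)+o_-(e)-u_-(e)-o_+(e)$. If $K$ has no bars set $S(K)=0$. (The value of $S(K)$ does not depend on which edge is labeled $e_1$.) *)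

(* Defs.v *)
(* Twisted knot diagrams are encoded as Gauss words with bars. *)
From HB Require Import structures.
From mathcomp Require Import all_boot all_order all_algebra.
Set Implicit Arguments. Unset Strict Implicit. Unset Printing Implicit Defensive.
Import Order.TTheory GRing.Theory Num.Theory.

(* An event met while travelling once around the oriented knot, starting
   from a base point:  None = a bar;
   Some (c, over, pos) = passage through the real crossing labelled c,
   as the over-strand iff over = true; the crossing is positive iff pos = true. *)
Definition event := option (nat * bool * bool).
Notation Bar := (@None (nat * bool * bool)).
Notation Pass c o s := (@Some (nat * bool * bool) (c, o, s)).

(* A twisted knot diagram (up to virtual moves and Omega_1^t, which do not
   change the Gauss word) is a (cyclically read) word of events. *)
Definition twisted_diagram := seq event.

Definition label (x : event) : option nat :=
  if x is Some (c, _, _) then Some c else None.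
Definition labels (w : twisted_diagram) : seq nat := pmap label w.

Definition gauss_ok (w : twisted_diagram) : Prop :=
  forall c : nat, count_mem c (labels w) = 0%N \/
    exists s : bool, [/\ count_mem c (labels w) = 2%N,
                         count_mem (Pass c true s) w = 1%N &
                         count_mem (Pass c false s) w = 1%N].

Definition nbars (w : twisted_diagram) : nat := count_mem Bar w.

(* Segments of the word between consecutive bars: seg_0, ..., seg_k,
   where k = nbars w. *)
Fixpoint split_bars (w : twisted_diagram) : seq (seq event) :=
  match w with
  | [::] => [:: [::]]
  | None :: w' => [::] :: split_bars w'
  | x :: w' => match split_bars w' with
               | s :: r => (x :: s) :: r
               | [::] => [:: [:: x]]
               end
  end.

(* Edge e_i (1 <= i <= k), i.e. the part of K between bar b_i and bar b_{i+1}
   (b_{k+1} = b_1), bars numbered in order from the base point. *)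
Definition edge (w : twisted_diagram) (i : nat) : seq event :=
  let segs := split_bars w in
  if (i < nbars w)%N then nth [::] segs i
  else nth [::] segs (nbars w) ++ nth [::] segs 0.

Definition o_plus (e : seq event) : nat :=
  count (fun x => if x is Some (_, true, true) then true else false) e.
Definition o_minus (e : seq event) : nat :=
  count (fun x => if x is Some (_, true, false) then true else false) e.
Definition u_plus (e : seq event) : nat :=
  count (fun x => if x is Some (_, false, true) then true else false) e.
Definition u_minus (e : seq event) : nat :=
  count (fun x => if x is Some (_, false, false) then true else false) e.

Definition s_edge (e : seq event) : int :=
  (u_plus e)%:Z + (o_minus e)%:Z - (u_minus e)%:Z - (o_plus e)%:Z.

Definition S_inv (w : twisted_diagram) : nat :=
  if nbars w == 0%N then 0%N
  else absz (((\sum_(1 <= i < (nbars w)./2.+1) s_edge (edge w (2 * i - 1)))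
             - (\sum_(1 <= i < (nbars w)./2.+1) s_edge (edge w (2 * i))))%R).

(* Reidemeister III data: strands T (top), M (middle), B (bottom);
   crossings x = T/M, y = T/B, z = M/B.  Booleans t, m, b give the order of the
   two crossings along T (x before y), M (x before z), B (y before z).
   Realizability (three oriented lines in the plane) forces
   eps_x eps_y = m b and eps_x eps_z = t b (as signs +-1). *)
Definition r3_T x y ex ey (t : bool) : seq event :=
  if t then [:: Pass x true ex; Pass y true ey] else [:: Pass y true ey; Pass x true ex].
Definition r3_M x z ex ez (m : bool) : seq event :=
  if m then [:: Pass x false ex; Pass z true ez] else [:: Pass z true ez; Pass x false ex].
Definition r3_B y z ey ez (b : bool) : seq event :=
  if b then [:: Pass y false ey; Pass z false ez] else [:: Pass z false ez; Pass y false ey].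

(* One move (in one direction); the theorem uses it in both directions. *)
Inductive move : twisted_diagram -> twisted_diagram -> Prop :=
  (* change of base point: same diagram *)
| mv_rot (w : twisted_diagram) (k : nat) : move w (rot k w)
| mv_R1 (a b : twisted_diagram) (c : nat) (o s : bool) :
    c \notin labels (a ++ b) ->
    move (a ++ [:: Pass c o s; Pass c (~~ o) s] ++ b) (a ++ b)
  (* Reidemeister II (both relative orientations of the strands) *)
| mv_R2 (a b e : twisted_diagram) (c d : nat) (s : bool) (under : seq event) :
    c != d -> c \notin labels (a ++ b ++ e) -> d \notin labels (a ++ b ++ e) ->
    (under = [:: Pass c false s; Pass d false (~~ s)] \/
     under = [:: Pass d false (~~ s); Pass c false s]) ->
    move (a ++ [:: Pass c true s; Pass d true (~~ s)] ++ b ++ under ++ e) (a ++ b ++ e)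
| mv_R3 (a b c d : twisted_diagram) (P Q R : seq event) (x y z : nat)
        (ex ey ez t m bb : bool) :
    uniq [:: x; y; z] ->
    (ex == ey) = (m == bb) -> (ex == ez) = (t == bb) ->
    perm_eq [:: P; Q; R] [:: r3_T x y ex ey t; r3_M x z ex ez m; r3_B y z ey ez bb] ->
    move (a ++ P ++ b ++ Q ++ c ++ R ++ d)
         (a ++ rev P ++ b ++ rev Q ++ c ++ rev R ++ d)
| mv_T2 (a b : twisted_diagram) : move (a ++ [:: Bar; Bar] ++ b) (a ++ b)
| mv_T3 (a b e : twisted_diagram) (c : nat) (o s : bool) :
    move (a ++ [:: Pass c o s] ++ b ++ [:: Pass c (~~ o) s] ++ e)
         (a ++ [:: Bar; Pass c (~~ o) s; Bar] ++ b ++ [:: Bar; Pass c o s; Bar] ++ e).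

(* Main.v *)
Require Import Defs.
From mathcomp Require Import all_boot all_order all_algebra.
From mathcomp Require Import zify ring.
Set Implicit Arguments. Unset Strict Implicit. Unset Printing Implicit Defensive.
Import Order.TTheory GRing.Theory Num.Theory.

Section Aux.
Local Open Scope ring_scope.

Definition sgn (b : bool) : int := if b then -1 else 1.
Definition vl (x : event) : int :=
  if x is Some (_, o, s) then (if o == s then -1 else 1) else 0.

Lemma s_edge_nil : s_edge [::] = 0.
Proof. by []. Qed.

Lemma s_edge_cons x e : s_edge (x :: e) = vl x + s_edge e.
Proof.
case: x => [[[c o] s]|]; rewrite /s_edge /u_plus /o_minus /u_minus /o_plus /=;
  [case: o; case: s => /=; lia | lia].
Qed.

Lemma s_edge_cat u v : s_edge (u ++ v) = s_edge u + s_edge v.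
Proof. by elim: u => [|x u IH]; rewrite ?add0r //= !s_edge_cons IH addrA. Qed.

Lemma s_edge_rev u : s_edge (rev u) = s_edge u.
Proof.
elim: u => [|x u IH] //; rewrite rev_cons -cats1 s_edge_cat IH s_edge_cons.
by rewrite s_edge_nil addr0 s_edge_cons addrC.
Qed.

Fixpoint Af (p : bool) (w : twisted_diagram) : int :=
  match w with
  | [::] => 0
  | x :: w' => if x is Some _ then sgn p * vl x + Af p w' else Af (~~ p) w'
  end.

Lemma nbars_bar w : nbars (Bar :: w) = (nbars w).+1.
Proof. by []. Qed.
Lemma nbars_some x w : nbars (Some x :: w) = nbars w.
Proof. by []. Qed.
Lemma nbars_cat u v : nbars (u ++ v) = (nbars u + nbars v)%N.
Proof. by rewrite /nbars count_cat. Qed.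

Lemma Af_neg p w : Af (~~ p) w = - Af p w.
Proof.
elim: w p => [|[x|] w IH] p /=; first by rewrite oppr0.
  by rewrite IH opprD; case: p; rewrite /sgn ?mulN1r ?mul1r ?opprK.
by rewrite IH.
Qed.

Lemma Af_sgn p w : Af p w = sgn p * Af false w.
Proof. by case: p; rewrite /sgn ?mul1r // (Af_neg false) mulN1r. Qed.

Lemma Af_cat p u v : Af p (u ++ v) = Af p u + Af (p (+) odd (nbars u)) v.
Proof.
elim: u p => [|[x|] u IH] p /=; first by rewrite add0r addbF.
  by rewrite IH addrA.
by rewrite IH add0n addbN addNb.
Qed.

Lemma Af_some p x w : Af p (Some x :: w) = sgn p * vl (Some x) + Af p w.
Proof. by []. Qed.

Lemma Af_nil p : Af p [::] = 0.
Proof. by []. Qed.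
Lemma Af_bar p w : Af p (Bar :: w) = Af (~~ p) w.
Proof. by []. Qed.

Lemma Af_nobar p w : Bar \notin w -> Af p w = sgn p * s_edge w.
Proof.
elim: w => [|[x|] w IH] H; first by rewrite /= mulr0.
  move: H; rewrite inE negb_or => /andP[_ H].
  by rewrite Af_some (IH H) s_edge_cons -mulrDr.
by move: H; rewrite inE eqxx.
Qed.

Lemma split_nonempty w : split_bars w != [::].
Proof. by case: w => [|[x|] w'] //=; case: (split_bars w'). Qed.

Lemma size_split w : size (split_bars w) = (nbars w).+1.
Proof.
elim: w => [|[x|] w IH] //=.
  by case E: (split_bars w) IH => [|s r] /= IH.
by rewrite IH.
Qed.

Lemma Af_split w : Af false w = \sum_(0 <= k < size (split_bars w))
    sgn (odd k) * s_edge (nth [::] (split_bars w) k).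
Proof.
elim: w => [|[x|] w IH].
- by rewrite /= big_nat1 mulr0.
- have := split_nonempty w.
  rewrite /=; case E: (split_bars w) IH => [|s r] IH // _.
  by rewrite IH /= !big_nat_recl //= s_edge_cons /sgn /= !mul1r addrA.
- have -> : Af false (Bar :: w) = - Af false w by exact: (Af_neg false w).
  rewrite IH /= big_nat_recl //= mulr0 add0r -sumrN.
  by apply: eq_bigr => i _; rewrite /sgn; case: (odd i) => /=; rewrite ?mulN1r ?mul1r ?opprK.
Qed.

Lemma alt_G (f : nat -> int) m :
  \sum_(0 <= k < (2 * m).+1) sgn (odd k) * f k =
  f 0%N + \sum_(1 <= i < m.+1) f (2 * i)%N - \sum_(1 <= i < m.+1) f (2 * i - 1)%N.
Proof.
elim: m => [|m IH].
  by rewrite big_nat1 !big_geq // /sgn /= mul1r addr0 subr0.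
rewrite (_ : (2 * m.+1).+1 = ((2 * m).+2).+1)%N; last by lia.
rewrite big_nat_recr // big_nat_recr //= IH.
rewrite [X in _ = _ + X - _]big_nat_recr // [X in _ = _ - X]big_nat_recr //=.
rewrite (_ : (2 * m.+1 = (2 * m).+2)%N); last by lia.
rewrite (_ : ((2 * m).+2 - 1 = (2 * m).+1)%N); last by lia.
rewrite /sgn /= oddM /=.
ring.
Qed.

Lemma alt_sum (f : nat -> int) (E : nat -> int) m :
  (forall i, (i < 2 * m.+1)%N -> E i = f i) -> E (2 * m.+1)%N = f (2 * m.+1)%N + f 0%N ->
  \sum_(1 <= i < m.+2) E (2 * i - 1)%N - \sum_(1 <= i < m.+2) E (2 * i)%N =
  - \sum_(0 <= k < (2 * m.+1).+1) sgn (odd k) * f k.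
Proof.
move=> HE HN.
rewrite [X in _ - X]big_nat_recr //= HN.
rewrite (@eq_big_nat _ _ _ 1 m.+2 (fun i => E (2 * i - 1)%N) (fun i => f (2 * i - 1)%N)); last first.
  move=> i /andP[h1 h2]; apply: HE; lia.
rewrite (@eq_big_nat _ _ _ 1 m.+1 (fun i => E (2 * i)%N) (fun i => f (2 * i)%N)); last first.
  move=> i /andP[h1 h2]; apply: HE; lia.
rewrite alt_G [X in _ = - (_ + X - _)]big_nat_recr //=.
ring.
Qed.

Lemma S_inv_A w : ~~ odd (nbars w) -> s_edge w = 0 -> S_inv w = absz (Af false w).
Proof.
move=> ev s0; rewrite /S_inv; case: eqP => [n0|nn0].
  have nb : Bar \notin w by apply/count_memPn.
  by rewrite Af_nobar // s0 mulr0.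
have hN := odd_double_half (nbars w); rewrite (negbTE ev) add0n in hN.
case En: ((nbars w)./2) hN => [|m] hN; first by rewrite -hN in nn0.
rewrite Af_split size_split -abszN; congr absz.
rewrite -hN (_ : (m.+1.*2 = 2 * m.+1)%N); last by lia.
rewrite (@alt_sum (fun k => s_edge (nth [::] (split_bars w) k)) (fun i => s_edge (edge w i)) m) ?opprK //.
  move=> i Hi /=; rewrite /edge -hN.
  by have -> : (i < m.+1.*2)%N = true by lia.
rewrite /= /edge -hN (_ : (m.+1.*2 = 2 * m.+1)%N); last by lia.
by rewrite ltnn s_edge_cat.
Qed.

Definition swap (x : event) : event :=
  if x is Some (c, o, s) then Some (c, ~~ o, s) else None.
Lemma swapK : involutive swap.
Proof. by case=> [[[c o] s]|] //=; rewrite negbK. Qed.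

Lemma pass_eq c' o' s' c o s :
  (Pass c' o' s' == Pass c o s) = [&& c' == c, o' == o & s' == s].
Proof.
apply/eqP/and3P => [[-> -> ->]|[/eqP-> /eqP-> /eqP->]] //; by rewrite !eqxx.
Qed.

Lemma count4 c w : count_mem c (labels w) =
  (count_mem (Pass c true true) w + count_mem (Pass c true false) w +
   count_mem (Pass c false true) w + count_mem (Pass c false false) w)%N.
Proof.
elim: w => [|[[[c' o] s]|] w IH] //=.
  rewrite !pass_eq -/(labels w) IH.
  by case: (c' == c); case: o; case: s => /=; lia.
Qed.

Lemma gauss_pair w c o s : gauss_ok w ->
  count_mem (Pass c o s) w = count_mem (Pass c (~~ o) s) w.
Proof.
move=> g; have := count4 c w.
case: (g c) => [-> | [s0 [-> H1 H2]]].
  case: o; case: s => /=;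
  move: (count_mem (Pass c true true) w) (count_mem (Pass c true false) w)
    (count_mem (Pass c false true) w) (count_mem (Pass c false false) w) => *; lia.
case: o; case: s; case: s0 H1 H2 => /=;
  move: (count_mem (Pass c true true) w) (count_mem (Pass c true false) w)
    (count_mem (Pass c false true) w) (count_mem (Pass c false false) w) => *; lia.
Qed.

Lemma gauss_s w : gauss_ok w -> s_edge w = 0.
Proof.
move=> g.
have P : perm_eq (map swap w) w.
  apply/allP => x _; apply/eqP; rewrite count_map.
  transitivity (count_mem (swap x) w).
    by apply: eq_count => y /=; apply/eqP/eqP => [<-|->]; rewrite swapK.
  case: x => [[[c o] s]|] //=.
  by symmetry; apply: gauss_pair.
have E1 : u_plus w = o_plus w.
  rewrite /u_plus -(permP P) count_map /o_plus; apply: eq_count.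
  by case=> [[[c o] s]|] //=; case: o; case: s.
have E2 : u_minus w = o_minus w.
  rewrite /u_minus -(permP P) count_map /o_minus; apply: eq_count.
  by case=> [[[c o] s]|] //=; case: o; case: s.
rewrite /s_edge E1 E2; lia.
Qed.

Definition eqvA (u v : twisted_diagram) :=
  odd (nbars u) = odd (nbars v) /\ forall p, Af p u = Af p v.

Lemma eqvA_refl u : eqvA u u.
Proof. by []. Qed.

Lemma eqvA_cat u v r r' : eqvA u v -> eqvA r r' -> eqvA (u ++ r) (v ++ r').
Proof.
case=> Hn HA [Hn' HA']; split; first by rewrite !nbars_cat !oddD Hn Hn'.
by move=> p; rewrite !Af_cat HA Hn HA'.
Qed.

Lemma eqvA_pair x y : vl (Some x) + vl (Some y) = 0 -> eqvA [:: Some x; Some y] [::].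
Proof.
move=> H; split => // p.
by rewrite !Af_some Af_nil addr0 -mulrDr H mulr0.
Qed.

Lemma s_pair x y : vl (Some x) + vl (Some y) = 0 -> s_edge [:: Some x; Some y] = 0.
Proof. by move=> H; rewrite !s_edge_cons s_edge_nil addr0. Qed.

Lemma eqvA_rev P : Bar \notin P -> eqvA P (rev P).
Proof.
move=> h; split; first by rewrite /nbars count_rev.
move=> p; rewrite !Af_nobar ?s_edge_rev //.
by rewrite mem_rev.
Qed.

Lemma vl_swap c o s : vl (Pass c (~~ o) s) = - vl (Pass c o s).
Proof. by case: o; case: s. Qed.

Lemma eqvA_T3 c o s : eqvA [:: Pass c o s] [:: Bar; Pass c (~~ o) s; Bar].
Proof.
split => // p.
rewrite !Af_bar !Af_some !Af_bar !Af_nil !addr0 vl_swap.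
by case: p; rewrite /sgn /= ?mulN1r ?mul1r ?opprK.
Qed.

Lemma props_of X Y : eqvA X Y -> s_edge X = s_edge Y ->
  [/\ odd (nbars X) = odd (nbars Y), s_edge X = s_edge Y &
      (~~ odd (nbars X) -> absz (Af false X) = absz (Af false Y))].
Proof. by case=> h1 h2 h3; split => // _; rewrite h2. Qed.

Lemma rot_props t d :
  [/\ odd (nbars (t ++ d)) = odd (nbars (d ++ t)), s_edge (t ++ d) = s_edge (d ++ t) &
      (~~ odd (nbars (t ++ d)) -> absz (Af false (t ++ d)) = absz (Af false (d ++ t)))].
Proof.
split; first by rewrite !nbars_cat addnC.
  by rewrite !s_edge_cat addrC.
rewrite nbars_cat oddD => ev.
have e : odd (nbars d) = odd (nbars t) by move: ev; case: (odd _); case: (odd _).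
rewrite !Af_cat e /=.
have N : forall w, Af true w = - Af false w by exact: (Af_neg false).
case: (odd (nbars t)); last by rewrite addrC.
by rewrite !N -opprB abszN addrC.
Qed.

Lemma barfree_r3 x y z ex ey ez t m bb P :
  P \in [:: r3_T x y ex ey t; r3_M x z ex ez m; r3_B y z ey ez bb] -> Bar \notin P.
Proof.
rewrite !inE => /or3P [/eqP->|/eqP->|/eqP->];
  [case: t | case: m | case: bb]; by rewrite !inE.
Qed.

Lemma move_props X Y : move X Y ->
  [/\ odd (nbars X) = odd (nbars Y), s_edge X = s_edge Y &
      (~~ odd (nbars X) -> absz (Af false X) = absz (Af false Y))].
Proof.
case.
- move=> w k; have := rot_props (take k w) (drop k w).
  by rewrite cat_take_drop => h; exact: h.
- move=> a b c o s _.
  have h : vl (Some (c, o, s)) + vl (Some (c, ~~ o, s)) = 0 by case: o; case: s.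
  apply: props_of.
    exact: (eqvA_cat (eqvA_refl a) (eqvA_cat (eqvA_pair h) (eqvA_refl b))).
  by rewrite !s_edge_cat (s_pair h) add0r.
- move=> a b e c d s under _ _ _ hu.
  have h1 : vl (Some (c, true, s)) + vl (Some (d, true, ~~ s)) = 0 by case: (s).
  have h2 : s_edge under = 0 /\ eqvA under [::].
    by case: hu => ->; split; first [apply: s_pair | apply: eqvA_pair]; case: (s).
  case: h2 => hs2 hA2.
  apply: props_of.
    exact: (eqvA_cat (eqvA_refl a) (eqvA_cat (eqvA_pair h1)
             (eqvA_cat (eqvA_refl b) (eqvA_cat hA2 (eqvA_refl e))))).
  by rewrite !s_edge_cat (s_pair h1) hs2 !add0r.
- move=> a b c d P Q R x y z ex ey ez t m bb _ _ _ hp.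
  have hP : Bar \notin P by apply: (barfree_r3 (x:=x) (y:=y) (z:=z) (ex:=ex) (ey:=ey) (ez:=ez) (t:=t) (m:=m) (bb:=bb)); rewrite -(perm_mem hp) inE eqxx.
  have hQ : Bar \notin Q by apply: (barfree_r3 (x:=x) (y:=y) (z:=z) (ex:=ex) (ey:=ey) (ez:=ez) (t:=t) (m:=m) (bb:=bb)); rewrite -(perm_mem hp) !inE eqxx orbT.
  have hR : Bar \notin R by apply: (barfree_r3 (x:=x) (y:=y) (z:=z) (ex:=ex) (ey:=ey) (ez:=ez) (t:=t) (m:=m) (bb:=bb)); rewrite -(perm_mem hp) !inE eqxx !orbT.
  apply: props_of.
    exact: (eqvA_cat (eqvA_refl a) (eqvA_cat (eqvA_rev hP) (eqvA_cat (eqvA_refl b)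
             (eqvA_cat (eqvA_rev hQ) (eqvA_cat (eqvA_refl c)
             (eqvA_cat (eqvA_rev hR) (eqvA_refl d))))))).
  by rewrite !s_edge_cat !s_edge_rev.
- move=> a b; apply: props_of.
    exact: (eqvA_cat (eqvA_refl a) (eqvA_cat (u := [:: Bar; Bar]) (v := [::]) (conj erefl (fun p => erefl)) (eqvA_refl b))).
  rewrite !s_edge_cat. have -> : s_edge [:: Bar; Bar] = 0 by []. by rewrite add0r.
- move=> a b e c o s.
  apply: props_of.
    have h2 := eqvA_T3 c (~~ o) s; rewrite negbK in h2.
    exact: (eqvA_cat (eqvA_refl a) (eqvA_cat (eqvA_T3 c o s)
             (eqvA_cat (eqvA_refl b) (eqvA_cat h2 (eqvA_refl e))))).
  rewrite !s_edge_cat !s_edge_cons !s_edge_nil vl_swap.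
  have -> : vl Bar = 0 by [].
  ring.
Qed.
End Aux.

Unset Implicit Arguments.
Theorem lemma7p5 (K K' : twisted_diagram) :
  gauss_ok K -> ~~ odd (nbars K) -> (move K K' \/ move K' K) ->
  S_inv K = S_inv K'.
Proof.
move=> g ev mv; have s0 := gauss_s g.
case: mv => H.
  have [hp hs ha] := move_props H.
  rewrite (S_inv_A ev s0) (ha ev) S_inv_A //; [by rewrite -hp | by rewrite -hs].
have [hp hs ha] := move_props H.
have ev' : ~~ odd (nbars K') by rewrite hp.
by rewrite (S_inv_A ev s0) -(ha ev') S_inv_A // hs.
Qed.
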